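(* The sets $C_{p_1},\dots,C_{p_n}$ are pairwise disjoint closed convex subsets of $\mathbb{R}^2$, and $C_{p_i}\subset W_{p_i}:=\{y\in\mathbb{R}^2: y\cdot(p_{i+1}-p_i)\le b_{i+1}-b_i\}\cap\{y\in\mathbb{R}^2: y\cdot(p_{i-1}-p_i)\le b_{i-1}-b_i\}$ for each $i$.
   Context: $n\ge3$; $p_1,\dots,p_n\in\mathbb{R}^2_{(u_1,u_2)}$ are distinct vertices, in counterclockwise order, of a convex polygon with interior $U$; indices mod $n$. $A\ge0$, $V(u)=A+\sum_i\frac{1}{2|u-p_i|}$. For $b_1,\dots,b_n\in\mathbb{R}$, $\varphi:\overline U\to\mathbb{R}$ is the unique continuous convex function, smooth in $U$, with $\det D^2\varphi=V$ in $U$, $\varphi(p_i)=b_i$, and $\varphi$ affine linear on each edge $[p_i,p_{i+1}]$. The subgradient set at a vertex is $C_{p_i}=\{y\in\mathbb{R}^2:\varphi(u)-\varphi(p_i)\ge\langle y,u-p_i\rangle\ \forall u\in\overline U\}$. *)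

(* Defs.v *)
From Stdlib Require Import Reals Lra Lia List.
From Coquelicot Require Import Coquelicot.
Open Scope R_scope.

Definition pt := (R * R)%type.

Definition dot (x y : pt) : R := fst x * fst y + snd x * snd y.
Definition psub (x y : pt) : pt := (fst x - fst y, snd x - snd y).
Definition cross (x y : pt) : R := fst x * snd y - snd x * fst y.
Definition enorm (x : pt) : R := sqrt (fst x ^ 2 + snd x ^ 2).
Definition pcomb (t : R) (x y : pt) : pt :=
  ((1 - t) * fst x + t * fst y, (1 - t) * snd x + t * snd y).

Definition idx (n i : nat) : nat := Nat.modulo i n.
Definition prv (n i : nat) : nat := Nat.modulo (i + n - 1) n.
Definition nxt (n i : nat) : nat := Nat.modulo (i + 1) n.

(* p_0,...,p_{n-1} are distinct vertices, in counterclockwise order,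
   of a convex polygon: every other vertex lies strictly to the left of
   each directed edge p_i -> p_{i+1}. *)
Definition ccw_convex_polygon (n : nat) (p : nat -> pt) : Prop :=
  (forall i j, (i < n)%nat -> (j < n)%nat -> i <> j -> p i <> p j) /\
  (forall i j, (i < n)%nat -> (j < n)%nat -> j <> i -> j <> nxt n i ->
     cross (psub (p (nxt n i)) (p i)) (psub (p j) (p i)) > 0).

Definition polyU (n : nat) (p : nat -> pt) (u : pt) : Prop :=
  forall i, (i < n)%nat -> cross (psub (p (nxt n i)) (p i)) (psub u (p i)) > 0.
Definition polyUbar (n : nat) (p : nat -> pt) (u : pt) : Prop :=
  forall i, (i < n)%nat -> cross (psub (p (nxt n i)) (p i)) (psub u (p i)) >= 0.

Definition Vfun (n : nat) (A : R) (p : nat -> pt) (u : pt) : R :=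
  A + fold_right Rplus 0 (map (fun i => / (2 * enorm (psub u (p i)))) (seq 0 n)).

(* partial derivatives; [false] = d/du1, [true] = d/du2 *)
Definition pderiv (b : bool) (f : pt -> R) : pt -> R :=
  fun u => if b then Derive (fun t => f (fst u, t)) (snd u)
           else Derive (fun t => f (t, snd u)) (fst u).
Definition pderivs (l : list bool) (f : pt -> R) : pt -> R :=
  fold_right pderiv f l.

Definition smooth_on (D : pt -> Prop) (f : pt -> R) : Prop :=
  forall l u, D u ->
    continuous (pderivs l f) u /\
    ex_derive (fun t => pderivs l f (t, snd u)) (fst u) /\
    ex_derive (fun t => pderivs l f (fst u, t)) (snd u).

Definition hess_det (f : pt -> R) (u : pt) : R :=
  pderivs (false :: false :: nil) f u * pderivs (true :: true :: nil) f u
  - pderivs (false :: true :: nil) f u * pderivs (true :: false :: nil) f u.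

Definition continuous_on_set (D : pt -> Prop) (f : pt -> R) : Prop :=
  forall u, D u -> forall eps, eps > 0 -> exists delta, delta > 0 /\
    forall v, D v -> enorm (psub v u) < delta -> Rabs (f v - f u) < eps.

Definition convex_on (D : pt -> Prop) (f : pt -> R) : Prop :=
  forall u v t, D u -> D v -> 0 <= t <= 1 ->
    f (pcomb t u v) <= (1 - t) * f u + t * f v.

Definition convex_set (C : pt -> Prop) : Prop :=
  forall y z t, C y -> C z -> 0 <= t <= 1 -> C (pcomb t y z).

Definition affine_on_segment (f : pt -> R) (x y : pt) : Prop :=
  exists a1 a2 c, forall t, 0 <= t <= 1 ->
    f (pcomb t x y) = a1 * fst (pcomb t x y) + a2 * snd (pcomb t x y) + c.

Definition is_solution (n : nat) (A : R) (p : nat -> pt) (b : nat -> R)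
  (phi : pt -> R) : Prop :=
  continuous_on_set (polyUbar n p) phi /\
  convex_on (polyUbar n p) phi /\
  smooth_on (polyU n p) phi /\
  (forall u, polyU n p u -> hess_det phi u = Vfun n A p u) /\
  (forall i, (i < n)%nat -> phi (p i) = b i) /\
  (forall i, (i < n)%nat -> affine_on_segment phi (p i) (p (nxt n i))).

Definition subgrad (n : nat) (p : nat -> pt) (phi : pt -> R) (i : nat) (y : pt) : Prop :=
  forall u, polyUbar n p u -> phi u - phi (p i) >= dot y (psub u (p i)).

Definition Wset (n : nat) (p : nat -> pt) (b : nat -> R) (i : nat) (y : pt) : Prop :=
  dot y (psub (p (nxt n i)) (p i)) <= b (nxt n i) - b i /\
  dot y (psub (p (prv n i)) (p i)) <= b (prv n i) - b i.

(* Main.v *)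
Require Import Defs.
From Stdlib Require Import Reals Lra Lia List Psatz.
From Coquelicot Require Import Coquelicot.
Open Scope R_scope.


Lemma ball_R (x y e : R) : ball x e y <-> Rabs (y - x) < e.
Proof. unfold ball; simpl; unfold AbsRing_ball, abs, minus, plus, opp; simpl. tauto. Qed.

Lemma cont_eps (f : pt -> R) (x : pt) : continuous f x ->
  forall eps, eps > 0 -> exists d, d > 0 /\ forall u v, Rabs (u - fst x) < d ->
    Rabs (v - snd x) < d -> Rabs (f (u,v) - f x) < eps.
Proof.
  intros H eps He. destruct x as [x1 x2].
  assert (L := H (ball (f (x1,x2)) (mkposreal eps He)) (locally_ball _ _)).
  unfold filtermap in L.
  assert (L2 : locally ((x1,x2) : prod_UniformSpace R_UniformSpace R_UniformSpace)
     (fun z => (fun u v => Rabs (f (u,v) - f (x1,x2)) < eps) (fst z) (snd z))).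
  { revert L. apply filter_imp. intros [z1 z2] Hz. simpl. apply ball_R in Hz. exact Hz. }
  apply (proj2 (locally_2d_locally _ _ _)) in L2. destruct L2 as [d Hd].
  exists d. split. apply cond_pos. intros u v Hu Hv. apply Hd; assumption.
Qed.

Lemma cont_R_of_eps (g : R -> R) x :
  (forall eps, eps > 0 -> exists d, d > 0 /\ forall y, Rabs (y-x) < d -> Rabs (g y - g x) < eps) ->
  continuous g x.
Proof.
  intros H. apply filterlim_locally. intros eps.
  destruct (H eps (cond_pos eps)) as [d [Hd Hg]].
  exists (mkposreal d Hd). intros y Hy. apply ball_R. apply Hg. apply ball_R in Hy. exact Hy.
Qed.

Lemma cont_pt_of_eps (g : pt -> R) (x : pt) :
  (forall eps, eps > 0 -> exists d, d > 0 /\ forall u v, Rabs (u - fst x) < d ->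
    Rabs (v - snd x) < d -> Rabs (g (u,v) - g x) < eps) -> continuous g x.
Proof.
  intros H. apply filterlim_locally. intros eps. destruct x as [x1 x2].
  destruct (H eps (cond_pos eps)) as [d [Hd Hg]].
  assert (L : locally_2d (fun u v => ball (g (x1,x2)) eps (g (u,v))) x1 x2).
  { exists (mkposreal d Hd). intros u v Hu Hv. apply ball_R. apply Hg; assumption. }
  apply locally_2d_locally in L. revert L. apply filter_imp. intros [z1 z2]. simpl. auto.
Qed.

Ltac rabs := repeat match goal with
  | |- context [Rabs ?x] => unfold Rabs at 1; destruct (Rcase_abs x)
  | H : context [Rabs ?x] |- _ => unfold Rabs in H; destruct (Rcase_abs x)
  end; try lra.

Lemma Rabs_mid (a b t : R) : Rmin a b <= t <= Rmax a b -> Rabs (t - a) <= Rabs (b - a).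
Proof. unfold Rmin, Rmax; destruct (Rle_dec a b); intros; rabs. Qed.

Lemma diff_partials (f : R -> R -> R) x y :
  locally_2d (fun u v => ex_derive (fun t => f t v) u) x y ->
  ex_derive (fun t => f x t) y ->
  continuity_2d_pt (fun u v => Derive (fun t => f t v) u) x y ->
  differentiable_pt_lim f x y (Derive (fun t => f t y) x) (Derive (fun t => f x t) y).
Proof.
  intros H0 H2 Hc eps.
  set (l1 := Derive (fun t => f t y) x). set (l2 := Derive (fun t => f x t) y).
  assert (He2 : 0 < eps / 2) by (destruct eps; simpl; lra).
  destruct (Hc (mkposreal _ He2)) as [d1 Hd1].
  destruct H0 as [d0 Hd0].
  assert (Hl2 := Derive_correct _ _ H2). apply is_derive_Reals in Hl2.
  destruct (Hl2 (eps/2) He2) as [d2 Hd2].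
  assert (Hdp : 0 < Rmin d0 (Rmin d1 d2)).
  { destruct d0, d1, d2; simpl. repeat apply Rmin_pos; auto. }
  exists (mkposreal _ Hdp). simpl. intros u v Hu Hv.
  assert (Hu0 : Rabs (u - x) < d0) by (eapply Rlt_le_trans; [exact Hu| apply Rmin_l]).
  assert (Hu1 : Rabs (u - x) < d1) by (eapply Rlt_le_trans; [exact Hu| eapply Rle_trans; [apply Rmin_r|apply Rmin_l]]).
  assert (Hv0 : Rabs (v - y) < d0) by (eapply Rlt_le_trans; [exact Hv| apply Rmin_l]).
  assert (Hv1 : Rabs (v - y) < d1) by (eapply Rlt_le_trans; [exact Hv| eapply Rle_trans; [apply Rmin_r|apply Rmin_l]]).
  assert (Hv2 : Rabs (v - y) < d2) by (eapply Rlt_le_trans; [exact Hv| eapply Rle_trans; [apply Rmin_r|apply Rmin_r]]).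
  destruct (MVT_gen (fun t => f t v) x u (fun t => Derive (fun z => f z v) t)) as [c [Hc1 Hc2]].
  { intros t Ht. apply Derive_correct. apply Hd0.
    - apply Rle_lt_trans with (Rabs (u - x)); [|exact Hu0].
      apply Rabs_mid. lra.
    - exact Hv0. }
  { intros t Ht. apply (proj2 (continuity_pt_filterlim _ _)).
    assert (Ht' : Rabs (t - x) < d0) by (apply Rle_lt_trans with (Rabs (u - x)); [apply Rabs_mid; lra|exact Hu0]).
    exact (ex_derive_continuous (fun t : R => f t v) t (Hd0 t v Ht' Hv0)). }
  assert (Hcc : Rabs (c - x) < d1).
  { apply Rle_lt_trans with (Rabs (u - x)); [apply Rabs_mid; lra|exact Hu1]. }
  assert (E1 := Hd1 c v Hcc Hv1). simpl in E1. fold l1 in E1.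
  assert (E2 : Rabs (f x v - f x y - l2 * (v - y)) <= eps / 2 * Rabs (v - y)).
  { destruct (Req_dec v y) as [Ev|Ev].
    - subst v. replace (f x y - f x y - l2 * (y - y)) with 0 by ring. rewrite Rabs_R0.
      replace (y - y) with 0 by ring. rewrite Rabs_R0. lra.
    - assert (Hh : v - y <> 0) by lra.
      assert (Hh2 : Rabs (v - y) < d2) by exact Hv2.
      specialize (Hd2 (v - y) Hh Hh2). replace (y + (v - y)) with v in Hd2 by ring.
      replace (f x v - f x y - l2 * (v - y)) with ((v - y) * ((f x v - f x y) / (v - y) - l2)) by (field; auto).
      rewrite Rabs_mult. rewrite Rmult_comm. apply Rmult_le_compat_r. apply Rabs_pos. left; exact Hd2. }
  replace (f u v - f x y - (l1 * (u - x) + l2 * (v - y))) with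
    ((u - x) * (Derive (fun z => f z v) c - l1) + (f x v - f x y - l2 * (v - y))) by (simpl in Hc2; lra).
  eapply Rle_trans. apply Rabs_triang. rewrite Rabs_mult.
  assert (Rabs (u - x) <= Rmax (Rabs (u - x)) (Rabs (v - y))) by apply Rmax_l.
  assert (Rabs (v - y) <= Rmax (Rabs (u - x)) (Rabs (v - y))) by apply Rmax_r.
  assert (0 <= Rabs (u - x)) by apply Rabs_pos.
  assert (Rabs (u - x) * Rabs (Derive (fun z => f z v) c - l1) <= Rabs (u - x) * (eps/2)) by
    (apply Rmult_le_compat_l; lra).
  destruct eps; simpl in *. nra.
Qed.

Lemma cont2d_of_cont (g : pt -> R) x1 x2 : continuous g (x1,x2) ->
  continuity_2d_pt (fun u v => g (u,v)) x1 x2.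
Proof.
  intros H eps. destruct (cont_eps g (x1,x2) H eps (cond_pos eps)) as [d [Hd Hg]].
  exists (mkposreal d Hd). intros u v Hu Hv. apply Hg; assumption.
Qed.

Definition padd (x0 a : pt) (t : R) : pt := (fst x0 + t * fst a, snd x0 + t * snd a).

Definition C1at (g : pt -> R) (x : pt) : Prop :=
  locally_2d (fun u v => ex_derive (fun t => g (t, v)) u /\ ex_derive (fun t => g (u, t)) v) (fst x) (snd x) /\
  continuous (pderiv false g) x.

Definition Dd (a : pt) (g : pt -> R) (x : pt) : R :=
  fst a * pderiv false g x + snd a * pderiv true g x.

Lemma chain (g : pt -> R) (x0 a : pt) (t0 : R) :
  C1at g (padd x0 a t0) ->
  is_derive (fun t => g (padd x0 a t)) t0 (Dd a g (padd x0 a t0)).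
Proof.
  unfold padd, Dd. intros [H0 Hc]. simpl in H0.
  set (x1 := fst x0 + t0 * fst a) in *. set (x2 := snd x0 + t0 * snd a) in *.
  assert (H0' : locally_2d (fun u v => ex_derive (fun t => g (t, v)) u) x1 x2).
  { destruct H0 as [d Hd]. exists d. intros u v Hu Hv. apply (Hd u v Hu Hv). }
  assert (H2 : ex_derive (fun t => g (x1, t)) x2).
  { destruct H0 as [d Hd]. apply (Hd x1 x2); rewrite Rminus_diag, Rabs_R0; apply cond_pos. }
  assert (Hc2 : continuity_2d_pt (fun u v => Derive (fun t => g (t, v)) u) x1 x2).
  { apply (cont2d_of_cont (pderiv false g) x1 x2 Hc). }
  assert (D := diff_partials (fun u v => g (u,v)) x1 x2 H0' H2 Hc2).
  assert (E := derivable_pt_lim_comp_2d (fun u v => g (u,v)) (fun t => fst x0 + t * fst a)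
    (fun t => snd x0 + t * snd a) t0 _ _ (fst a) (snd a) D).
  apply is_derive_Reals. unfold pderiv; simpl.
  replace (fst a * Derive (fun t : R => g (t, x2)) x1 + snd a * Derive (fun t : R => g (x1, t)) x2)
    with (Derive (fun t : R => g (t, x2)) x1 * fst a + Derive (fun t : R => g (x1, t)) x2 * snd a) by ring.
  apply E.
  - apply is_derive_Reals. auto_derive; auto; ring.
  - apply is_derive_Reals. auto_derive; auto; ring.
Qed.


Lemma fin_min (n : nat) (P : nat -> R -> Prop) :
  (forall k d d', P k d -> 0 < d' <= d -> P k d') ->
  (forall k, (k < n)%nat -> exists d, d > 0 /\ P k d) ->
  exists d, d > 0 /\ forall k, (k < n)%nat -> P k d.
Proof.
  intros Hm. induction n as [|n IH]; intros H.
  - exists 1. split. lra. intros k Hk. lia.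
  - destruct IH as [d1 [Hd1 H1]]. { intros k Hk. apply H. lia. }
    destruct (H n (Nat.lt_succ_diag_r n)) as [d2 [Hd2 H2]].
    exists (Rmin d1 d2). split. apply Rmin_pos; lra.
    intros k Hk. destruct (Nat.eq_dec k n) as [->|Hne].
    + apply Hm with d2; auto. split. apply Rmin_pos; lra. apply Rmin_r.
    + apply Hm with d1. apply H1. lia. split. apply Rmin_pos; lra. apply Rmin_l.
Qed.

Lemma U_open n p x : polyU n p x -> locally_2d (fun u v => polyU n p (u,v)) (fst x) (snd x).
Proof.
  intros Hx.
  destruct (fin_min n (fun k d => forall u v, Rabs (u - fst x) < d -> Rabs (v - snd x) < d ->
     cross (psub (p (nxt n k)) (p k)) (psub (u,v) (p k)) > 0)) as [d [Hd Hk]].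
  - intros k d d' H [H1 H2] u v Hu Hv. apply H; lra.
  - intros k Hk. specialize (Hx k Hk).
    unfold cross, psub in *; simpl in *.
    set (e1 := fst (p (nxt n k)) - fst (p k)) in *.
    set (e2 := snd (p (nxt n k)) - snd (p k)) in *.
    set (c := e1 * (snd x - snd (p k)) - e2 * (fst x - fst (p k))) in *.
    assert (Hpos : 0 < Rabs e1 + Rabs e2 + 1) by (assert (0 <= Rabs e1) by apply Rabs_pos; assert (0 <= Rabs e2) by apply Rabs_pos; lra).
    exists (c / (Rabs e1 + Rabs e2 + 1)). split. apply Rdiv_lt_0_compat; lra.
    intros u v Hu Hv.
    replace (e1 * (v - snd (p k)) - e2 * (u - fst (p k))) with (c + (e1 * (v - snd x) - e2 * (u - fst x))) by (unfold c; ring).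
    assert (Habs : Rabs (e1 * (v - snd x) - e2 * (u - fst x)) <= (Rabs e1 + Rabs e2) * (c / (Rabs e1 + Rabs e2 + 1))).
    { eapply Rle_trans. apply Rabs_triang. rewrite Rabs_Ropp, !Rabs_mult.
      assert (0 <= Rabs e1) by apply Rabs_pos; assert (0 <= Rabs e2) by apply Rabs_pos. nra. }
    assert ((Rabs e1 + Rabs e2) * (c / (Rabs e1 + Rabs e2 + 1)) < c).
    { unfold Rdiv. rewrite <- Rmult_assoc. apply Rmult_lt_reg_r with (Rabs e1 + Rabs e2 + 1). lra.
      rewrite Rmult_assoc, Rinv_l by lra. nra. }
    pose proof (Rabs_maj2 (e1 * (v - snd x) - e2 * (u - fst x))). lra.
  - exists (mkposreal d Hd). intros u v Hu Hv k Hk0. apply Hk; auto.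
Qed.

Lemma C1_pderivs n p phi l x : smooth_on (polyU n p) phi -> polyU n p x -> C1at (pderivs l phi) x.
Proof.
  intros Hs Hx. split.
  - destruct (U_open n p x Hx) as [d Hd]. exists d. intros u v Hu Hv.
    destruct (Hs l (u,v) (Hd u v Hu Hv)) as [_ [H1 H2]]. simpl in H1, H2. auto.
  - exact (proj1 (Hs (false :: l) x Hx)).
Qed.


Lemma is_derive_lin2 (f g : R -> R) t df dg a b :
  is_derive f t df -> is_derive g t dg -> is_derive (fun t => a * f t + b * g t) t (a * df + b * dg).
Proof.
  intros Hf Hg. apply (is_derive_plus (fun t => a * f t) (fun t => b * g t)).
  - apply (is_derive_scal f t a df Hf).
  - apply (is_derive_scal g t b dg Hg).
Qed.

Definition Qf (phi : pt -> R) (a b : pt) (x : pt) : R :=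
  fst a * Dd b (pderiv false phi) x + snd a * Dd b (pderiv true phi) x.

Lemma deriv1 n p phi x0 a t0 : smooth_on (polyU n p) phi -> polyU n p (padd x0 a t0) ->
  is_derive (fun t => phi (padd x0 a t)) t0 (Dd a phi (padd x0 a t0)).
Proof. intros Hs Hx. apply chain. apply (C1_pderivs n p phi nil _ Hs Hx). Qed.

Lemma deriv2 n p phi x0 a b t0 : smooth_on (polyU n p) phi -> polyU n p (padd x0 b t0) ->
  is_derive (fun t => Dd a phi (padd x0 b t)) t0 (Qf phi a b (padd x0 b t0)).
Proof.
  intros Hs Hx. unfold Dd at 1. unfold Qf.
  apply is_derive_lin2; apply chain.
  - apply (C1_pderivs n p phi (false :: nil) _ Hs Hx).
  - apply (C1_pderivs n p phi (true :: nil) _ Hs Hx).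
Qed.

Lemma schwarz_phi n p phi x : smooth_on (polyU n p) phi -> polyU n p x ->
  pderiv false (pderiv true phi) x = pderiv true (pderiv false phi) x.
Proof.
  intros Hs Hx. destruct x as [x1 x2].
  assert (S := Schwarz (fun u v => phi (u,v)) x1 x2).
  unfold pderiv; simpl. apply S.
  - destruct (U_open n p (x1,x2) Hx) as [d Hd]. exists d. intros u v Hu Hv.
    assert (HU := Hd u v Hu Hv).
    destruct (Hs nil (u,v) HU) as [_ [H1 H2]].
    destruct (Hs (true :: nil) (u,v) HU) as [_ [H3 _]].
    destruct (Hs (false :: nil) (u,v) HU) as [_ [_ H4]].
    simpl in *. unfold pderiv in H3, H4; simpl in H3, H4. auto.
  - apply (cont2d_of_cont (pderivs (false :: true :: nil) phi) x1 x2).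
    exact (proj1 (Hs (false :: true :: nil) (x1,x2) Hx)).
  - apply (cont2d_of_cont (pderivs (true :: false :: nil) phi) x1 x2).
    exact (proj1 (Hs (true :: false :: nil) (x1,x2) Hx)).
Qed.

Lemma mono_deriv (f : R -> R) x d dl : dl > 0 ->
  (forall h, Rabs h < dl -> h * (f (x+h) - f x) >= 0) -> is_derive f x d -> d >= 0.
Proof.
  intros Hdl Hm Hd. destruct (Rge_dec d 0) as [|Hneg]; auto. exfalso.
  apply is_derive_Reals in Hd.
  assert (He : 0 < - d / 2) by lra.
  destruct (Hd _ He) as [dd Hdd].
  assert (Hdp : 0 < dd) by apply cond_pos.
  assert (M1 : Rmin dl dd <= dl) by apply Rmin_l.
  assert (M2 : Rmin dl dd <= dd) by apply Rmin_r.
  assert (M3 : 0 < Rmin dl dd) by (apply Rmin_pos; lra).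
  set (h := Rmin dl dd / 2).
  assert (Hh : 0 < h) by (unfold h; lra).
  assert (Hh1 : h < dl) by (unfold h; lra).
  assert (Hh2 : h < dd) by (unfold h; lra).
  assert (A1 : Rabs h < dl) by (rewrite Rabs_pos_eq; lra).
  assert (A2 : Rabs h < dd) by (rewrite Rabs_pos_eq; lra).
  specialize (Hdd h (Rgt_not_eq _ _ Hh) A2). specialize (Hm h A1).
  apply Rabs_lt_between in Hdd. destruct Hdd as [_ Hdd].
  assert ((f (x + h) - f x) / h < d / 2) by lra.
  assert (f (x + h) - f x < h * (d/2)).
  { apply Rmult_lt_compat_l with (r := h) in H; auto. unfold Rdiv in H.
    replace (h * ((f (x + h) - f x) * / h)) with (f (x + h) - f x) in H by (field; lra). lra. }
  nra.
Qed.

Lemma fo_chord (g : R -> R) d : (forall t, 0 < t <= 1 -> g t <= (1-t) * g 0 + t * g 1) ->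
  is_derive g 0 d -> d <= g 1 - g 0.
Proof.
  intros Hc Hd. destruct (Rle_dec d (g 1 - g 0)) as [|Hn]; auto. exfalso.
  apply is_derive_Reals in Hd.
  assert (He : 0 < (d - (g 1 - g 0)) / 2) by lra.
  destruct (Hd _ He) as [dd Hdd].
  assert (Hdp : 0 < dd) by apply cond_pos.
  assert (M1 : Rmin 1 (dd/2) <= 1) by apply Rmin_l.
  assert (M2 : Rmin 1 (dd/2) <= dd/2) by apply Rmin_r.
  assert (M3 : 0 < Rmin 1 (dd/2)) by (apply Rmin_pos; lra).
  set (h := Rmin 1 (dd / 2)).
  assert (Hh : 0 < h) by (unfold h; lra).
  assert (Hh1 : h <= 1) by (unfold h; lra).
  assert (Hh2 : h < dd) by (unfold h; lra).
  assert (A2 : Rabs h < dd) by (rewrite Rabs_pos_eq; lra).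
  specialize (Hdd h (Rgt_not_eq _ _ Hh) A2). rewrite Rplus_0_l in Hdd.
  apply Rabs_lt_between in Hdd. destruct Hdd as [Hdd _].
  specialize (Hc h (conj Hh Hh1)).
  assert (E : (g h - g 0) / h <= g 1 - g 0).
  { apply Rmult_le_reg_r with h; auto. unfold Rdiv. rewrite Rmult_assoc, Rinv_l by lra. nra. }
  lra.
Qed.

Lemma padd_pcomb (u v : pt) t : padd u (psub v u) t = pcomb t u v.
Proof. unfold padd, pcomb, psub; simpl. f_equal; ring. Qed.

Lemma Ubar_of_U n p u : polyU n p u -> polyUbar n p u.
Proof. intros H k Hk. left. apply H; auto. Qed.

Lemma SUP n p phi u v : smooth_on (polyU n p) phi -> convex_on (polyUbar n p) phi ->
  polyU n p u -> polyUbar n p v -> phi v - phi u >= Dd (psub v u) phi u.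
Proof.
  intros Hs Hc Hu Hv.
  assert (D := deriv1 n p phi u (psub v u) 0 Hs).
  assert (E0 : padd u (psub v u) 0 = u) by (destruct u; unfold padd; simpl; f_equal; ring).
  assert (E1 : padd u (psub v u) 1 = v) by (destruct u, v; unfold padd, psub; simpl; f_equal; ring).
  rewrite E0 in D. specialize (D Hu).
  assert (F := fo_chord (fun t => phi (padd u (psub v u) t)) (Dd (psub v u) phi u)).
  simpl in F. rewrite E0, E1 in F. apply Rle_ge. apply F; auto.
  intros t Ht. rewrite padd_pcomb. apply Hc; auto. apply Ubar_of_U; auto. lra.
Qed.


Lemma line_in_U n p x a : polyU n p x -> exists dl, dl > 0 /\ forall t, Rabs t < dl -> polyU n p (padd x a t).
Proof.
  intros Hx. destruct (U_open n p x Hx) as [d Hd].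
  assert (Hp : 0 < Rabs (fst a) + Rabs (snd a) + 1) by (pose proof (Rabs_pos (fst a)); pose proof (Rabs_pos (snd a)); lra).
  exists (d / (Rabs (fst a) + Rabs (snd a) + 1)). split.
  - apply Rdiv_lt_0_compat; [apply cond_pos|lra].
  - intros t Ht. unfold padd. apply Hd.
    + replace (fst x + t * fst a - fst x) with (t * fst a) by ring. rewrite Rabs_mult.
      assert (Rabs t * (Rabs (fst a) + Rabs (snd a) + 1) < d).
      { apply Rmult_lt_reg_r with (/ (Rabs (fst a) + Rabs (snd a) + 1)). apply Rinv_0_lt_compat; lra.
        rewrite Rmult_assoc, Rinv_r by lra. lra. }
      pose proof (Rabs_pos t). pose proof (Rabs_pos (fst a)). pose proof (Rabs_pos (snd a)). nra.
    + replace (snd x + t * snd a - snd x) with (t * snd a) by ring. rewrite Rabs_mult.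
      assert (Rabs t * (Rabs (fst a) + Rabs (snd a) + 1) < d).
      { apply Rmult_lt_reg_r with (/ (Rabs (fst a) + Rabs (snd a) + 1)). apply Rinv_0_lt_compat; lra.
        rewrite Rmult_assoc, Rinv_r by lra. lra. }
      pose proof (Rabs_pos t). pose proof (Rabs_pos (fst a)). pose proof (Rabs_pos (snd a)). nra.
Qed.

Lemma Dd_psub_padd x a t g y : Dd (psub (padd x a t) x) g y = t * Dd a g y.
Proof. unfold Dd, psub, padd; simpl. ring. Qed.

Lemma Dd_neg (a b : pt) g y : Dd (psub a b) g y = - Dd (psub b a) g y.
Proof. unfold Dd, psub; simpl. ring. Qed.

Lemma Q_nonneg n p phi x a : smooth_on (polyU n p) phi -> convex_on (polyUbar n p) phi ->
  polyU n p x -> Qf phi a a x >= 0.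
Proof.
  intros Hs Hc Hx.
  destruct (line_in_U n p x a Hx) as [dl [Hdl Hl]].
  assert (E0 : padd x a 0 = x) by (destruct x; unfold padd; simpl; f_equal; ring).
  assert (D := deriv2 n p phi x a a 0 Hs). rewrite E0 in D. specialize (D Hx).
  apply (mono_deriv (fun t => Dd a phi (padd x a t)) 0 _ dl Hdl); [|exact D]. simpl.
  intros h Hh. rewrite Rplus_0_l, E0.
  assert (Hu' := Hl h Hh).
  assert (S1 := SUP n p phi x (padd x a h) Hs Hc Hx (Ubar_of_U _ _ _ Hu')).
  assert (S2 := SUP n p phi (padd x a h) x Hs Hc Hu' (Ubar_of_U _ _ _ Hx)).
  rewrite Dd_psub_padd in S1. rewrite Dd_neg, Dd_psub_padd in S2. lra.
Qed.

Lemma quad_identity phi a b x :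
  Qf phi a a x * Qf phi b b x - Qf phi a b x * Qf phi b a x = hess_det phi x * (cross a b) ^ 2.
Proof. unfold Qf, Dd, hess_det, cross; simpl. ring. Qed.

Lemma Q_sym n p phi a b x : smooth_on (polyU n p) phi -> polyU n p x -> Qf phi a b x = Qf phi b a x.
Proof.
  intros Hs Hx. assert (S := schwarz_phi n p phi x Hs Hx).
  unfold Qf, Dd. rewrite S. ring.
Qed.

Lemma nonadj_pointwise n p phi x d : smooth_on (polyU n p) phi -> convex_on (polyUbar n p) phi ->
  polyU n p x -> hess_det phi x > 0 -> d <> (0,0) -> Qf phi d d x = 0 -> False.
Proof.
  intros Hs Hc Hx Hh Hd Q0.
  set (e := (- snd d, fst d)).
  set (q := Qf phi d e x). set (r := Qf phi e e x).
  assert (Hr : r >= 0) by (apply (Q_nonneg n p); auto).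
  assert (Hsym : Qf phi e d x = q) by (unfold q; symmetry; apply (Q_sym n p); auto).
  set (eps := - q / (r + 1)).
  assert (Hq := Q_nonneg n p phi x (fst d + eps * fst e, snd d + eps * snd e) Hs Hc Hx).
  assert (Exp : Qf phi (fst d + eps * fst e, snd d + eps * snd e) (fst d + eps * fst e, snd d + eps * snd e) x
     = Qf phi d d x + eps * (Qf phi d e x + Qf phi e d x) + eps^2 * Qf phi e e x).
  { unfold Qf, Dd; simpl. ring. }
  rewrite Exp, Q0, Hsym in Hq. fold q r in Hq.
  assert (Hq0 : q = 0).
  { unfold eps in Hq.
    assert (Hq' : q^2 * (-(r+2)) / (r+1)^2 >= 0).
    { replace (q^2 * (-(r+2)) / (r+1)^2) with (0 + - q / (r + 1) * (q + q) + (- q / (r + 1)) ^ 2 * r) by (field; lra). exact Hq. }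
    assert (q^2 * (-(r+2)) >= 0).
    { apply Rge_le in Hq'. apply Rle_ge. 
      replace (q^2 * (-(r+2))) with (q^2 * (-(r+2)) / (r+1)^2 * (r+1)^2) by (field; lra).
      apply Rmult_le_pos; [lra|]. nra. }
    nra. }
  assert (I := quad_identity phi d e x). rewrite Q0, Hsym in I. fold q r in I. rewrite Hq0 in I.
  assert (Hcr : cross d e > 0).
  { unfold cross, e; simpl. destruct d as [d1 d2]. simpl.
    destruct (Req_dec d1 0); destruct (Req_dec d2 0); try (subst; exfalso; apply Hd; reflexivity); nra. }
  assert (hess_det phi x * cross d e ^ 2 > 0) by (apply Rmult_gt_0_compat; auto; nra).
  lra.
Qed.


Lemma nxt_spec n i : (i < n)%nat ->
  ((i + 1 < n)%nat /\ nxt n i = (i + 1)%nat) \/ ((i + 1 = n)%nat /\ nxt n i = 0%nat).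
Proof.
  intros H. unfold nxt. destruct (Nat.eq_dec (i+1) n) as [E|E].
  - right. split; auto. rewrite E. apply Nat.mod_same. lia.
  - left. split. lia. apply Nat.mod_small. lia.
Qed.

Lemma nxt_lt n i : (i < n)%nat -> (nxt n i < n)%nat.
Proof. intros H. destruct (nxt_spec n i H) as [[? ->]|[? ->]]; lia. Qed.

Lemma prv_lt n i : (i < n)%nat -> (prv n i < n)%nat.
Proof. intros H. unfold prv. apply Nat.mod_upper_bound. lia. Qed.

Lemma nxt_neq n i : (2 <= n)%nat -> (i < n)%nat -> nxt n i <> i.
Proof. intros H2 H. destruct (nxt_spec n i H) as [[? ->]|[? ->]]; lia. Qed.

Lemma nxt_nxt_neq n i : (3 <= n)%nat -> (i < n)%nat -> nxt n (nxt n i) <> i.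
Proof.
  intros H3 H. destruct (nxt_spec n i H) as [[H1 E]|[H1 E]]; rewrite E.
  - destruct (nxt_spec n (i+1) H1) as [[? ->]|[? ->]]; lia.
  - destruct (nxt_spec n 0 ltac:(lia)) as [[? ->]|[? ->]]; lia.
Qed.

Lemma cross_vertex n p k j : ccw_convex_polygon n p -> (k < n)%nat -> (j < n)%nat ->
  cross (psub (p (nxt n k)) (p k)) (psub (p j) (p k)) >= 0 /\
  (j <> k -> j <> nxt n k -> cross (psub (p (nxt n k)) (p k)) (psub (p j) (p k)) > 0).
Proof.
  intros [_ Hc] Hk Hj. split.
  - destruct (Nat.eq_dec j k) as [->|E1].
    + unfold cross, psub; simpl. right; ring.
    + destruct (Nat.eq_dec j (nxt n k)) as [->|E2].
      * unfold cross, psub; simpl. right; ring.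
      * left. apply Hc; auto.
  - intros E1 E2. apply Hc; auto.
Qed.

Lemma vertex_Ubar n p j : ccw_convex_polygon n p -> (j < n)%nat -> polyUbar n p (p j).
Proof. intros H Hj k Hk. apply (cross_vertex n p k j H Hk Hj). Qed.

Lemma cross_pcomb (e a b q : pt) t :
  cross e (psub (pcomb t a b) q) = (1 - t) * cross e (psub a q) + t * cross e (psub b q).
Proof. unfold cross, psub, pcomb; simpl. ring. Qed.

Lemma Rinv_nonneg x : 0 <= x -> 0 <= / x.
Proof.
  intros H. destruct (Req_dec x 0) as [->|E].
  - rewrite Rinv_0. lra.
  - left. apply Rinv_0_lt_compat. lra.
Qed.

Lemma fold_ge (f : nat -> R) (l : list nat) k : (forall i, 0 <= f i) -> In k l ->
  fold_right Rplus 0 (map f l) >= f k.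
Proof.
  intros Hf. induction l as [|a l IH]; simpl; intros Hin.
  - destruct Hin.
  - assert (G : forall l', 0 <= fold_right Rplus 0 (map f l')).
    { induction l' as [|b l' IH']; simpl. lra. specialize (Hf b). lra. }
    destruct Hin as [->|Hin].
    + specialize (G l). lra.
    + specialize (IH Hin). specialize (Hf a). lra.
Qed.

Lemma enorm_nonneg v : 0 <= enorm v.
Proof. unfold enorm. apply sqrt_pos. Qed.

Lemma V_ge_term n A p u k : 0 <= A -> (k < n)%nat ->
  Vfun n A p u >= / (2 * enorm (psub u (p k))).
Proof.
  intros HA Hk. unfold Vfun.
  assert (F := fold_ge (fun i => / (2 * enorm (psub u (p i)))) (seq 0 n) k).
  simpl in F. assert (F' : fold_right Rplus 0 (map (fun i => / (2 * enorm (psub u (p i)))) (seq 0 n))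
     >= / (2 * enorm (psub u (p k)))).
  { apply F. intros i. apply Rinv_nonneg. pose proof (enorm_nonneg (psub u (p i))). lra.
    apply in_seq. lia. }
  lra.
Qed.

Lemma enorm_pos v : v <> (0,0) -> enorm v > 0.
Proof.
  intros H. unfold enorm. apply sqrt_lt_R0. destruct v as [a c]; simpl.
  destruct (Req_dec a 0); destruct (Req_dec c 0); try (subst; exfalso; apply H; reflexivity); nra.
Qed.

Lemma V_pos_U n A p u : (0 < n)%nat -> 0 <= A -> polyU n p u -> Vfun n A p u > 0.
Proof.
  intros Hn HA Hu. assert (V := V_ge_term n A p u 0 HA Hn).
  assert (E : psub u (p 0%nat) <> (0,0)).
  { intros E. specialize (Hu 0%nat Hn). rewrite E in Hu. unfold cross in Hu; simpl in Hu. lra. }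
  assert (P := enorm_pos _ E). assert (0 < / (2 * enorm (psub u (p 0%nat)))) by (apply Rinv_0_lt_compat; lra).
  lra.
Qed.


Lemma Dd_scal_vec v a c g y : fst v = c * fst a -> snd v = c * snd a -> Dd v g y = c * Dd a g y.
Proof. intros H1 H2. unfold Dd. rewrite H1, H2. ring. Qed.

Lemma Dd_lin_vec v a b c1 c2 g y : fst v = c1 * fst a + c2 * fst b -> snd v = c1 * snd a + c2 * snd b ->
  Dd v g y = c1 * Dd a g y + c2 * Dd b g y.
Proof. intros H1 H2. unfold Dd. rewrite H1, H2. ring. Qed.

Lemma dot_psub_neg y a b : dot y (psub a b) = - dot y (psub b a).
Proof. unfold dot, psub; simpl; ring. Qed.

Lemma subgrad_both n p phi i j y : ccw_convex_polygon n p -> (i < n)%nat -> (j < n)%nat ->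
  subgrad n p phi i y -> subgrad n p phi j y -> phi (p j) - phi (p i) = dot y (psub (p j) (p i)).
Proof.
  intros Hc Hi Hj Si Sj.
  assert (A1 := Si (p j) (vertex_Ubar n p j Hc Hj)).
  assert (A2 := Sj (p i) (vertex_Ubar n p i Hc Hi)).
  rewrite dot_psub_neg in A2. lra.
Qed.

Lemma nonadj_case n p A b phi i j y : (3 <= n)%nat -> ccw_convex_polygon n p -> 0 <= A ->
  is_solution n A p b phi -> (i < n)%nat -> (j < n)%nat -> i <> j -> j <> nxt n i -> i <> nxt n j ->
  subgrad n p phi i y -> subgrad n p phi j y -> False.
Proof.
  intros H3 Hc HA [Hcont [Hconv [Hs [Hdet [Hb Haff]]]]] Hi Hj Hij Hn1 Hn2 Si Sj.
  set (Pi := p i) in *. set (Pj := p j) in *. set (d := psub Pj Pi).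
  assert (Hd : d <> (0,0)).
  { intros E. destruct Hc as [Hdist _]. apply (Hdist i j Hi Hj Hij).
    unfold d, psub in E. fold Pi Pj. destruct Pi, Pj; simpl in E. injection E; intros. f_equal; lra. }
  assert (Eij := subgrad_both n p phi i j y Hc Hi Hj Si Sj). fold Pi Pj in Eij. fold d in Eij.
  assert (Hseg : forall t, 0 < t < 1 -> polyU n p (padd Pi d t)).
  { intros t Ht k Hk. unfold d. rewrite padd_pcomb. rewrite cross_pcomb.
    destruct (cross_vertex n p k i Hc Hk Hi) as [a1 a2].
    destruct (cross_vertex n p k j Hc Hk Hj) as [b1 b2].
    fold Pi in a1, a2. fold Pj in b1, b2.
    destruct (Nat.eq_dec i k) as [Ek|Ek]; [|destruct (Nat.eq_dec i (nxt n k)) as [Ek'|Ek']].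
    - assert (j <> k) by lia. assert (j <> nxt n k) by (subst; auto).
      specialize (b2 H H0). nra.
    - assert (j <> k) by (intro; subst; auto). assert (j <> nxt n k) by lia.
      specialize (b2 H H0). nra.
    - specialize (a2 Ek Ek'). nra. }
  assert (Hval : forall t, 0 < t < 1 -> phi (padd Pi d t) = phi Pi + t * dot y d).
  { intros t Ht.
    assert (G1 := Si (padd Pi d t) (Ubar_of_U _ _ _ (Hseg t Ht))). fold Pi in G1.
    assert (E : dot y (psub (padd Pi d t) Pi) = t * dot y d) by (unfold dot, psub, padd, d; simpl; ring).
    rewrite E in G1.
    assert (G2 := Hconv Pi Pj t (vertex_Ubar n p i Hc Hi) (vertex_Ubar n p j Hc Hj) (conj (Rlt_le _ _ (proj1 Ht)) (Rlt_le _ _ (proj2 Ht)))). fold Pi Pj in G2.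
    unfold d in *. rewrite <- padd_pcomb in G2. assert (phi Pj = phi Pi + dot y (psub Pj Pi)) by lra. rewrite H in G2. nra. }
  assert (Hgrad : forall t, 0 < t < 1 -> Dd d phi (padd Pi d t) = dot y d).
  { intros t Ht. assert (HU := Hseg t Ht).
    assert (S1 := SUP n p phi (padd Pi d t) Pj Hs Hconv HU (vertex_Ubar n p j Hc Hj)).
    assert (S2 := SUP n p phi (padd Pi d t) Pi Hs Hconv HU (vertex_Ubar n p i Hc Hi)).
    rewrite (Dd_scal_vec _ d (1 - t)) in S1 by (unfold d, psub, padd; simpl; ring).
    rewrite (Dd_scal_vec _ d (- t)) in S2 by (unfold d, psub, padd; simpl; ring).
    rewrite Hval in S1, S2 by auto.
    assert (phi Pj = phi Pi + dot y d) by lra.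
    assert (X1 : (1 - t) * (Dd d phi (padd Pi d t) - dot y d) <= 0) by nra.
    assert (X2 : t * (Dd d phi (padd Pi d t) - dot y d) >= 0) by nra.
    assert (Dd d phi (padd Pi d t) - dot y d <= 0).
    { destruct (Rle_dec (Dd d phi (padd Pi d t) - dot y d) 0); auto. nra. }
    assert (Dd d phi (padd Pi d t) - dot y d >= 0).
    { destruct (Rge_dec (Dd d phi (padd Pi d t) - dot y d) 0); auto. nra. }
    lra. }
  set (m := padd Pi d (1/2)).
  assert (Hm : polyU n p m) by (apply Hseg; lra).
  assert (D := deriv2 n p phi Pi d d (1/2) Hs Hm).
  assert (D0 : is_derive (fun t => Dd d phi (padd Pi d t)) (1/2) 0).
  { apply (is_derive_ext_loc (fun _ : R => dot y d) (fun t => Dd d phi (padd Pi d t)) (1/2) 0).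
    + exists (mkposreal (1/4) ltac:(lra)). intros t Ht.
      assert (Ht2 := proj1 (ball_R (1/2) t (1/4)) Ht). simpl in Ht2.
      assert (Ht3 : 0 < t < 1) by (revert Ht2; rabs).
      symmetry. apply Hgrad. exact Ht3.
    + apply (is_derive_const (K := R_AbsRing) (dot y d) (1/2)). }
  assert (Q0 : Qf phi d d m = 0).
  { apply is_derive_unique in D. apply is_derive_unique in D0. fold m in D. congruence. }
  apply (nonadj_pointwise n p phi m d Hs Hconv Hm); auto.
  rewrite Hdet by auto. apply V_pos_U; auto. lia.
Qed.


Lemma subgrad_closed n p phi i : closed (subgrad n p phi i).
Proof.
  intros [y1 y2] Hy u Hu.
  set (c := phi u - phi (p i)). set (d := psub u (p i)).
  destruct (Rge_dec c (dot (y1,y2) d)) as [ok|bad]; auto. exfalso. apply Hy.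
  set (g := dot (y1,y2) d - c).
  assert (Hg : g > 0) by (unfold g; lra).
  assert (Hp : 0 < Rabs (fst d) + Rabs (snd d) + 1) by (pose proof (Rabs_pos (fst d)); pose proof (Rabs_pos (snd d)); lra).
  assert (L : locally_2d (fun z1 z2 => ~ subgrad n p phi i (z1,z2)) y1 y2).
  { exists (mkposreal (g / (Rabs (fst d) + Rabs (snd d) + 1)) ltac:(apply Rdiv_lt_0_compat; lra)).
    intros z1 z2 H1 H2 Hs.
    change (Rabs (z1 - y1) < g / (Rabs (fst d) + Rabs (snd d) + 1)) in H1.
    change (Rabs (z2 - y2) < g / (Rabs (fst d) + Rabs (snd d) + 1)) in H2. specialize (Hs u Hu). fold c d in Hs.
    assert (Rabs (z1 - y1) * (Rabs (fst d) + Rabs (snd d) + 1) < g).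
    { apply Rmult_lt_reg_r with (/ (Rabs (fst d) + Rabs (snd d) + 1)). apply Rinv_0_lt_compat; lra.
      rewrite Rmult_assoc, Rinv_r by lra.  lra. }
    assert (Rabs (z2 - y2) * (Rabs (fst d) + Rabs (snd d) + 1) < g).
    { apply Rmult_lt_reg_r with (/ (Rabs (fst d) + Rabs (snd d) + 1)). apply Rinv_0_lt_compat; lra.
      rewrite Rmult_assoc, Rinv_r by lra. lra. }
    assert (E : dot (z1,z2) d = dot (y1,y2) d + ((z1 - y1) * fst d + (z2 - y2) * snd d)) by (unfold dot; simpl; ring).
    assert (Rabs ((z1 - y1) * fst d + (z2 - y2) * snd d) < g).
    { eapply Rle_lt_trans. apply Rabs_triang. rewrite !Rabs_mult.
      pose proof (Rabs_pos (z1 - y1)). pose proof (Rabs_pos (z2 - y2)).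
      pose proof (Rabs_pos (fst d)). pose proof (Rabs_pos (snd d)). nra. }
    pose proof (Rabs_maj2 ((z1 - y1) * fst d + (z2 - y2) * snd d)). unfold g in *. lra. }
  apply locally_2d_locally in L. revert L. apply filter_imp. intros [z1 z2]. simpl. auto.
Qed.

Lemma subgrad_convex n p phi i : convex_set (subgrad n p phi i).
Proof.
  intros y z t Hy Hz Ht u Hu. specialize (Hy u Hu). specialize (Hz u Hu).
  assert (E : dot (pcomb t y z) (psub u (p i)) = (1 - t) * dot y (psub u (p i)) + t * dot z (psub u (p i)))
    by (unfold dot, pcomb; simpl; ring).
  rewrite E. nra.
Qed.

Lemma subgrad_W n p A b phi i y : (3 <= n)%nat -> ccw_convex_polygon n p -> is_solution n A p b phi ->
  (i < n)%nat -> subgrad n p phi i y -> Wset n p b i y.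
Proof.
  intros H3 Hc [_ [_ [_ [_ [Hb _]]]]] Hi Hy. split.
  - assert (Hn := nxt_lt n i Hi). assert (G := Hy _ (vertex_Ubar n p _ Hc Hn)).
    rewrite !Hb in G by auto. lra.
  - assert (Hn := prv_lt n i Hi). assert (G := Hy _ (vertex_Ubar n p _ Hc Hn)).
    rewrite !Hb in G by auto. lra.
Qed.


Lemma cont_lin2 (f g : pt -> R) x c1 c2 : continuous f x -> continuous g x ->
  continuous (fun y => c1 * f y + c2 * g y) x.
Proof.
  intros Hf Hg.
  apply (continuous_plus (fun y => c1 * f y) (fun y => c2 * g y)).
  - apply (continuous_scal_r c1 f x Hf).
  - apply (continuous_scal_r c2 g x Hg).
Qed.

Lemma Qf_cont n p phi a b x : smooth_on (polyU n p) phi -> polyU n p x -> continuous (Qf phi a b) x.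
Proof.
  intros Hs Hx. unfold Qf, Dd.
  apply cont_lin2; apply cont_lin2.
  - exact (proj1 (Hs (false :: false :: nil) x Hx)).
  - exact (proj1 (Hs (true :: false :: nil) x Hx)).
  - exact (proj1 (Hs (false :: true :: nil) x Hx)).
  - exact (proj1 (Hs (true :: true :: nil) x Hx)).
Qed.

Lemma sum_abs_pos (a : pt) (b : pt) : 0 < Rabs (fst a) + Rabs (snd a) + Rabs (fst b) + Rabs (snd b) + 1.
Proof. pose proof (Rabs_pos (fst a)); pose proof (Rabs_pos (snd a)); pose proof (Rabs_pos (fst b)); pose proof (Rabs_pos (snd b)); lra. Qed.

Lemma small_lin (u1 u2 a1 a2 S d0 : R) : 0 < S -> Rabs a1 + Rabs a2 + 1 <= S ->
  Rabs u1 < d0 / S -> Rabs u2 < d0 / S -> Rabs (u1 * a1 + u2 * a2) < d0.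
Proof.
  intros HS HS2 H1 H2.
  assert (Rabs u1 * S < d0).
  { apply Rmult_lt_reg_r with (/ S). apply Rinv_0_lt_compat; lra.
    rewrite Rmult_assoc, Rinv_r by lra. unfold Rdiv in H1. lra. }
  assert (Rabs u2 * S < d0).
  { apply Rmult_lt_reg_r with (/ S). apply Rinv_0_lt_compat; lra.
    rewrite Rmult_assoc, Rinv_r by lra. unfold Rdiv in H2. lra. }
  eapply Rle_lt_trans. apply Rabs_triang. rewrite !Rabs_mult.
  pose proof (Rabs_pos u1); pose proof (Rabs_pos u2); pose proof (Rabs_pos a1); pose proof (Rabs_pos a2).
  destruct (Rle_dec (Rabs u1) (Rabs u2)).
  - assert (Rabs u1 * Rabs a1 <= Rabs u2 * Rabs a1) by (apply Rmult_le_compat_r; lra).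
    assert (Rabs u2 * (Rabs a1 + Rabs a2) <= Rabs u2 * S) by (apply Rmult_le_compat_l; lra). nra.
  - assert (Rabs u2 * Rabs a2 <= Rabs u1 * Rabs a2) by (apply Rmult_le_compat_r; lra).
    assert (Rabs u1 * (Rabs a1 + Rabs a2) <= Rabs u1 * S) by (apply Rmult_le_compat_l; lra). nra.
Qed.

Definition Pt (P0 tau nu : pt) (s r : R) : pt :=
  (fst P0 + s * fst tau + r * fst nu, snd P0 + s * snd tau + r * snd nu).

Lemma Pt_r P0 tau nu s r : Pt P0 tau nu s r = padd (padd P0 tau s) nu r.
Proof. reflexivity. Qed.

Lemma Pt_s P0 tau nu s r : Pt P0 tau nu s r = padd (padd P0 nu r) tau s.
Proof. unfold Pt, padd; simpl. f_equal; ring. Qed.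

Lemma cont2d_Pt (g : pt -> R) P0 tau nu r s : continuous g (Pt P0 tau nu s r) ->
  continuity_2d_pt (fun u v => g (Pt P0 tau nu v u)) r s.
Proof.
  intros H eps. destruct (cont_eps g _ H eps (cond_pos eps)) as [d0 [Hd0 Hg]].
  set (S := Rabs (fst tau) + Rabs (snd tau) + Rabs (fst nu) + Rabs (snd nu) + 1).
  assert (HS : 0 < S) by apply sum_abs_pos.
  exists (mkposreal (d0 / S) ltac:(apply Rdiv_lt_0_compat; lra)).
  intros u v Hu Hv. change (Rabs (u - r) < d0 / S) in Hu. change (Rabs (v - s) < d0 / S) in Hv.
  unfold Pt at 1. apply Hg; unfold Pt; simpl.
  - replace (fst P0 + v * fst tau + u * fst nu - (fst P0 + s * fst tau + r * fst nu))
      with ((v - s) * fst tau + (u - r) * fst nu) by ring.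
    apply small_lin with S; auto. unfold S. pose proof (Rabs_pos (snd tau)); pose proof (Rabs_pos (snd nu)); lra.
  - replace (snd P0 + v * snd tau + u * snd nu - (snd P0 + s * snd tau + r * snd nu))
      with ((v - s) * snd tau + (u - r) * snd nu) by ring.
    apply small_lin with S; auto. unfold S. pose proof (Rabs_pos (fst tau)); pose proof (Rabs_pos (fst nu)); lra.
Qed.

Lemma cont1_Pt (g : pt -> R) P0 tau nu r s : continuous g (Pt P0 tau nu s r) ->
  continuous (fun v => g (Pt P0 tau nu v r)) s.
Proof.
  intros H. apply cont_R_of_eps. intros eps Heps.
  destruct (cont2d_Pt g P0 tau nu r s H (mkposreal eps Heps)) as [d Hd].
  exists d. split. apply cond_pos. intros v Hv. apply (Hd r v). rewrite Rminus_diag, Rabs_R0. apply cond_pos. exact Hv.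
Qed.


Definition nu (tau : pt) : pt := (- snd tau, fst tau).

Definition AdjHyp n p phi P0 tau y r0 c : Prop :=
  smooth_on (polyU n p) phi /\ convex_on (polyUbar n p) phi /\
  0 < r0 /\ r0 <= 1 /\ 0 < c /\
  (forall s r, 1/8 <= s <= 7/8 -> 0 < r <= r0 -> polyU n p (Pt P0 tau (nu tau) s r)) /\
  (forall s, 0 <= s <= 1 -> polyUbar n p (Pt P0 tau (nu tau) s 0)) /\
  (forall u, polyUbar n p u -> phi u - phi P0 >= dot y (psub u P0)) /\
  (forall s, 0 <= s <= 1 -> phi (Pt P0 tau (nu tau) s 0) = phi P0 + s * dot y tau) /\
  (forall s r, 1/8 <= s <= 7/8 -> 0 < r <= r0 ->
     hess_det phi (Pt P0 tau (nu tau) s r) * (cross tau (nu tau))^2 >= c).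

Definition Wr phi P0 tau y s r := Dd (nu tau) phi (Pt P0 tau (nu tau) s r) - dot y (nu tau).
Definition Ws phi P0 tau y s r := Dd tau phi (Pt P0 tau (nu tau) s r) - dot y tau.
Definition Aq phi P0 tau s r := Qf phi tau tau (Pt P0 tau (nu tau) s r).
Definition Bq phi P0 tau s r := Qf phi (nu tau) (nu tau) (Pt P0 tau (nu tau) s r).
Definition wv phi P0 tau y s r := phi (Pt P0 tau (nu tau) s r) - phi P0 - dot y (psub (Pt P0 tau (nu tau) s r) P0).
Definition Kc phi P0 tau y r0 := 2 * (wv phi P0 tau y (1/4) r0 + wv phi P0 tau y (3/4) r0) / r0 + 1.

Lemma adj_bounds n p phi P0 tau y r0 c : AdjHyp n p phi P0 tau y r0 c ->
  forall s r, 1/4 <= s <= 3/4 -> 0 < r <= r0/2 ->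
  0 <= Wr phi P0 tau y s r <= Kc phi P0 tau y r0 /\
  - r * Wr phi P0 tau y s r <= s * Ws phi P0 tau y s r /\
  (1 - s) * Ws phi P0 tau y s r <= r * Wr phi P0 tau y s r.
Proof.
  intros [Hs [Hc [Hr0 [Hr1 [Hcp [HU [HUb [Hw [He Hd]]]]]]]]] s r Hsr Hr.
  set (v := nu tau) in *.
  set (X := Pt P0 tau v s r).
  assert (HX : polyU n p X) by (apply HU; lra).
  assert (dX : dot y (psub X P0) = s * dot y tau + r * dot y v) by (unfold X, Pt, dot, psub; simpl; ring).
  assert (wX := Hw X (Ubar_of_U _ _ _ HX)). rewrite dX in wX.
  unfold Wr, Ws. fold v X.
  assert (S1 := SUP n p phi X (Pt P0 tau v s 0) Hs Hc HX (HUb s ltac:(lra))).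
  rewrite (Dd_scal_vec _ v (- r)) in S1 by (unfold X, Pt, psub; simpl; ring).
  rewrite He in S1 by lra.
  assert (Ha : 0 <= r * (Dd v phi X - dot y v)) by nra.
  assert (Ha' : 0 <= Dd v phi X - dot y v).
  { destruct (Rle_dec 0 (Dd v phi X - dot y v)); auto. nra. }
  assert (S2 := SUP n p phi X (Pt P0 tau v 0 0) Hs Hc HX (HUb 0 ltac:(lra))).
  rewrite (Dd_lin_vec _ tau v (- s) (- r)) in S2 by (unfold X, Pt, psub; simpl; ring).
  rewrite He in S2 by lra.
  assert (S3 := SUP n p phi X (Pt P0 tau v 1 0) Hs Hc HX (HUb 1 ltac:(lra))).
  rewrite (Dd_lin_vec _ tau v (1 - s) (- r)) in S3 by (unfold X, Pt, psub; simpl; ring).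
  rewrite He in S3 by lra.
  assert (HY : polyU n p (Pt P0 tau v s r0)) by (apply HU; lra).
  assert (S4 := SUP n p phi X (Pt P0 tau v s r0) Hs Hc HX (Ubar_of_U _ _ _ HY)).
  rewrite (Dd_scal_vec _ v (r0 - r)) in S4 by (unfold X, Pt, psub; simpl; ring).
  assert (H14 : polyU n p (Pt P0 tau v (1/4) r0)) by (apply HU; lra).
  assert (H34 : polyU n p (Pt P0 tau v (3/4) r0)) by (apply HU; lra).
  set (t := 2 * s - 1/2).
  assert (Cv := Hc _ _ t (Ubar_of_U _ _ _ H14) (Ubar_of_U _ _ _ H34) ltac:(unfold t; lra)).
  assert (EP : pcomb t (Pt P0 tau v (1/4) r0) (Pt P0 tau v (3/4) r0) = Pt P0 tau v s r0)
    by (unfold pcomb, Pt, t; apply injective_projections; simpl; lra).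
  rewrite EP in Cv.
  assert (w14 := Hw _ (Ubar_of_U _ _ _ H14)). assert (w34 := Hw _ (Ubar_of_U _ _ _ H34)).
  unfold Kc, wv. fold v.
  set (a := phi (Pt P0 tau v (1/4) r0) - phi P0 - dot y (psub (Pt P0 tau v (1/4) r0) P0)) in *.
  set (bb := phi (Pt P0 tau v (3/4) r0) - phi P0 - dot y (psub (Pt P0 tau v (3/4) r0) P0)) in *.
  assert (Ea : dot y (psub (Pt P0 tau v (1/4) r0) P0) = 1/4 * dot y tau + r0 * dot y v) by (unfold Pt, dot, psub; simpl; ring).
  assert (Eb : dot y (psub (Pt P0 tau v (3/4) r0) P0) = 3/4 * dot y tau + r0 * dot y v) by (unfold Pt, dot, psub; simpl; ring).
  assert (Ha0 : 0 <= a) by (unfold a; lra). assert (Hb0 : 0 <= bb) by (unfold bb; lra).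
  assert (Hphi : phi (Pt P0 tau v s r0) <= phi P0 + s * dot y tau + r0 * dot y v + a + bb).
  { assert (phi (Pt P0 tau v (1/4) r0) = phi P0 + 1/4 * dot y tau + r0 * dot y v + a) by (unfold a; lra).
    assert (phi (Pt P0 tau v (3/4) r0) = phi P0 + 3/4 * dot y tau + r0 * dot y v + bb) by (unfold bb; lra).
    assert (0 <= t <= 1) by (unfold t; lra).
    unfold t in *. nra. }
  assert (Hc1 : (r0 - r) * (Dd v phi X - dot y v) <= a + bb) by nra.
  assert (Hc2 : (Dd v phi X - dot y v) <= 2 * (a + bb) / r0).
  { apply Rmult_le_reg_l with r0; auto. unfold Rdiv. 
    replace (r0 * (2 * (a + bb) * / r0)) with (2 * (a + bb)) by (field; lra). nra. }
  split; [split|split]; try lra; nra.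
Qed.

Lemma adj_pointwise n p phi P0 tau y r0 c : AdjHyp n p phi P0 tau y r0 c ->
  forall s r, 1/8 <= s <= 7/8 -> 0 < r <= r0 ->
  0 <= Aq phi P0 tau s r /\
  forall lam, Bq phi P0 tau s r >= 2 * lam - lam^2 / c * Aq phi P0 tau s r.
Proof.
  intros [Hs [Hc [Hr0 [Hr1 [Hcp [HU [HUb [Hw [He Hd]]]]]]]]] s r Hsr Hr.
  set (v := nu tau) in *. set (X := Pt P0 tau v s r).
  assert (HX : polyU n p X) by (apply HU; lra).
  unfold Aq, Bq. fold v X.
  assert (HA := Q_nonneg n p phi X tau Hs Hc HX).
  assert (I := quad_identity phi tau v X).
  rewrite (Q_sym n p phi v tau X Hs HX) in I.
  assert (HD := Hd s r Hsr Hr). fold v X in HD.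
  set (A := Qf phi tau tau X) in *. set (B := Qf phi v v X) in *. set (C := Qf phi tau v X) in *.
  assert (HAB : A * B >= c + C^2) by nra.
  assert (HA0 : A > 0).
  { destruct (Req_dec A 0) as [E|E]. rewrite E in HAB. nra. lra. }
  split. lra. intros lam.
  assert (Hm : A * c * (B - (2 * lam - lam^2 / c * A)) >= 0).
  { replace (A * c * (B - (2 * lam - lam^2 / c * A))) with (A * B * c - 2 * lam * A * c + lam^2 * A^2) by (field; lra).
    assert (HAB' : A * B >= c) by (pose proof (pow2_ge_0 C); lra).
    assert (A * B * c >= c * c) by (apply Rmult_ge_compat_r; lra).
    pose proof (pow2_ge_0 (c - lam * A)). nra. }
  assert (A * c > 0) by nra.
  destruct (Rge_dec (B - (2 * lam - lam^2 / c * A)) 0). lra.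
  exfalso. nra.
Qed.

Lemma is_derive_sub_const (f : R -> R) x d c : is_derive f x d -> is_derive (fun t => f t - c) x d.
Proof.
  intros H. assert (H2 := is_derive_minus f (fun _ => c) x d 0 H (is_derive_const c x)).
  replace d with (minus d 0). exact H2. unfold minus, plus, opp; simpl. ring.
Qed.

Lemma dWr n p phi P0 tau y r0 c : AdjHyp n p phi P0 tau y r0 c ->
  forall s r, 1/8 <= s <= 7/8 -> 0 < r <= r0 ->
  is_derive (fun r' => Wr phi P0 tau y s r') r (Bq phi P0 tau s r).
Proof.
  intros H s r Hsr Hr. destruct H as [Hs [_ [_ [_ [_ [HU _]]]]]].
  unfold Wr, Bq. apply is_derive_sub_const. rewrite Pt_r.
  apply (deriv2 n p phi (padd P0 tau s) (nu tau) (nu tau) r Hs).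
  rewrite <- Pt_r. apply HU; auto.
Qed.

Lemma dWs n p phi P0 tau y r0 c : AdjHyp n p phi P0 tau y r0 c ->
  forall s r, 1/8 <= s <= 7/8 -> 0 < r <= r0 ->
  is_derive (fun s' => Ws phi P0 tau y s' r) s (Aq phi P0 tau s r).
Proof.
  intros H s r Hsr Hr. destruct H as [Hs [_ [_ [_ [_ [HU _]]]]]].
  unfold Ws, Aq. apply is_derive_sub_const. rewrite Pt_s.
  apply (is_derive_ext (fun s' => Dd tau phi (padd (padd P0 (nu tau) r) tau s'))).
  { intros t. rewrite Pt_s. reflexivity. }
  apply (deriv2 n p phi (padd P0 (nu tau) r) tau tau s Hs).
  rewrite <- Pt_s. apply HU; auto.
Qed.

Lemma dWr_s n p phi P0 tau y r0 c : AdjHyp n p phi P0 tau y r0 c ->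
  forall s r, 1/8 <= s <= 7/8 -> 0 < r <= r0 ->
  ex_derive (fun s' => Wr phi P0 tau y s' r) s.
Proof.
  intros H s r Hsr Hr. destruct H as [Hs [_ [_ [_ [_ [HU _]]]]]].
  eexists. unfold Wr. apply is_derive_sub_const.
  apply (is_derive_ext (fun s' => Dd (nu tau) phi (padd (padd P0 (nu tau) r) tau s'))).
  { intros t. rewrite Pt_s. reflexivity. }
  apply (deriv2 n p phi (padd P0 (nu tau) r) (nu tau) tau s Hs).
  rewrite <- Pt_s. apply HU; auto.
Qed.


Lemma Rmin14 : Rmin (1/4) (3/4) = 1/4.
Proof. apply Rmin_left. lra. Qed.
Lemma Rmax14 : Rmax (1/4) (3/4) = 3/4.
Proof. apply Rmax_right. lra. Qed.

Definition Gf phi P0 tau y r := RInt (fun s => Wr phi P0 tau y s r) (1/4) (3/4).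

Lemma exRInt_Wr n p phi P0 tau y r0 c : AdjHyp n p phi P0 tau y r0 c ->
  forall r, 0 < r <= r0 -> ex_RInt (fun s => Wr phi P0 tau y s r) (1/4) (3/4).
Proof.
  intros H r Hr. apply (ex_RInt_continuous (V := R_CompleteNormedModule)). rewrite Rmin14, Rmax14. intros z Hz.
  exact (ex_derive_continuous (fun s => Wr phi P0 tau y s r) z (dWr_s n p phi P0 tau y r0 c H z r ltac:(lra) Hr)).
Qed.

Lemma cont_Aq n p phi P0 tau y r0 c : AdjHyp n p phi P0 tau y r0 c ->
  forall s r, 1/8 <= s <= 7/8 -> 0 < r <= r0 -> continuous (fun s' => Aq phi P0 tau s' r) s.
Proof.
  intros H s r Hs Hr. destruct H as [HS [_ [_ [_ [_ [HU _]]]]]].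
  unfold Aq. apply (cont1_Pt (Qf phi tau tau)). apply (Qf_cont n p); auto.
Qed.

Lemma cont_Bq n p phi P0 tau y r0 c : AdjHyp n p phi P0 tau y r0 c ->
  forall s r, 1/8 <= s <= 7/8 -> 0 < r <= r0 -> continuous (fun s' => Bq phi P0 tau s' r) s.
Proof.
  intros H s r Hs Hr. destruct H as [HS [_ [_ [_ [_ [HU _]]]]]].
  unfold Bq. apply (cont1_Pt (Qf phi (nu tau) (nu tau))). apply (Qf_cont n p); auto.
Qed.

Lemma IA n p phi P0 tau y r0 c : AdjHyp n p phi P0 tau y r0 c ->
  forall r, 0 < r <= r0 ->
  is_RInt (fun s => Aq phi P0 tau s r) (1/4) (3/4) (Ws phi P0 tau y (3/4) r - Ws phi P0 tau y (1/4) r).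
Proof.
  intros H r Hr.
  apply (is_RInt_derive (fun s => Ws phi P0 tau y s r) (fun s => Aq phi P0 tau s r)); rewrite Rmin14, Rmax14; intros z Hz.
  - apply (dWs n p phi P0 tau y r0 c H); auto. lra.
  - apply (cont_Aq n p phi P0 tau y r0 c H); auto. lra.
Qed.

Lemma G_bounds n p phi P0 tau y r0 c : AdjHyp n p phi P0 tau y r0 c ->
  forall r, 0 < r <= r0/2 -> 0 <= Gf phi P0 tau y r <= Kc phi P0 tau y r0 / 2.
Proof.
  intros H r Hr. assert (Hr0 : 0 < r0) by (destruct H as [_ [_ [? _]]]; auto).
  assert (Ex := exRInt_Wr n p phi P0 tau y r0 c H r ltac:(lra)).
  unfold Gf. split.
  - replace 0 with (RInt (fun _ => 0) (1/4) (3/4)).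
    + apply RInt_le; auto. lra. apply ex_RInt_const.
      intros x Hx. apply (adj_bounds n p phi P0 tau y r0 c H); lra.
    + rewrite RInt_const. unfold scal; simpl. unfold mult; simpl. ring.
  - replace (Kc phi P0 tau y r0 / 2) with (RInt (fun _ => Kc phi P0 tau y r0) (1/4) (3/4)).
    + apply RInt_le; auto. lra. apply ex_RInt_const.
      intros x Hx. apply (adj_bounds n p phi P0 tau y r0 c H); lra.
    + rewrite RInt_const. unfold scal; simpl. unfold mult; simpl. field.
Qed.

Lemma exRInt_Bq n p phi P0 tau y r0 c : AdjHyp n p phi P0 tau y r0 c ->
  forall r, 0 < r <= r0 -> ex_RInt (fun s => Bq phi P0 tau s r) (1/4) (3/4).
Proof.
  intros H r Hr. apply (ex_RInt_continuous (V := R_CompleteNormedModule)). rewrite Rmin14, Rmax14. intros z Hz.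
  apply (cont_Bq n p phi P0 tau y r0 c H); auto. lra.
Qed.

Lemma Leibniz n p phi P0 tau y r0 c : AdjHyp n p phi P0 tau y r0 c ->
  forall r, 0 < r < r0 -> is_derive (Gf phi P0 tau y) r (RInt (fun s => Bq phi P0 tau s r) (1/4) (3/4)).
Proof.
  intros H r Hr.
  assert (Hd : 0 < Rmin r (r0 - r)) by (apply Rmin_pos; lra).
  assert (Hd1 := Rmin_l r (r0 - r)). assert (Hd2 := Rmin_r r (r0 - r)).
  assert (Hloc : forall x0, Rabs (x0 - r) < Rmin r (r0 - r) -> 0 < x0 < r0) by (intros x0 Hx; revert Hx; rabs).
  assert (L := is_derive_RInt_param (fun u t => Wr phi P0 tau y t u) (1/4) (3/4) r).
  rewrite Rmin14, Rmax14 in L.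
  replace (RInt (fun s => Bq phi P0 tau s r) (1/4) (3/4)) with
    (RInt (fun t => Derive (fun u => Wr phi P0 tau y t u) r) (1/4) (3/4)).
  - unfold Gf. apply L.
    + exists (mkposreal _ Hd). intros x0 Hx0 t Ht. apply (proj1 (ball_R _ _ _)) in Hx0.
      specialize (Hloc x0 Hx0). eexists. apply (dWr n p phi P0 tau y r0 c H); lra.
    + intros t Ht.
      apply (continuity_2d_pt_ext_loc (fun u v => Qf phi (nu tau) (nu tau) (Pt P0 tau (nu tau) v u))).
      * assert (Hd' : 0 < Rmin (Rmin r (r0 - r)) (1/8)) by (apply Rmin_pos; lra).
        exists (mkposreal _ Hd'). simpl. intros u v Hu Hv.
        assert (Hm1 := Rmin_l (Rmin r (r0 - r)) (1/8)). assert (Hm2 := Rmin_r (Rmin r (r0 - r)) (1/8)).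
        assert (Hu' : 0 < u < r0) by (apply Hloc; lra).
        assert (Hv' : 1/8 <= v <= 7/8) by (revert Hv; rabs).
        symmetry. apply is_derive_unique. apply (dWr n p phi P0 tau y r0 c H); lra.
      * apply (cont2d_Pt (Qf phi (nu tau) (nu tau))).
        destruct H as [HS [_ [_ [_ [_ [HU _]]]]]]. apply (Qf_cont n p); auto. apply HU; lra.
    + exists (mkposreal _ Hd). intros x0 Hx0. apply (proj1 (ball_R _ _ _)) in Hx0.
      specialize (Hloc x0 Hx0). apply (exRInt_Wr n p phi P0 tau y r0 c H). lra.
  - apply RInt_ext. rewrite Rmin14, Rmax14. intros x Hx.
    apply is_derive_unique. apply (dWr n p phi P0 tau y r0 c H); lra.
Qed.

Lemma K_pos n p phi P0 tau y r0 c : AdjHyp n p phi P0 tau y r0 c -> Kc phi P0 tau y r0 >= 1.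
Proof.
  intros [Hs [Hc [Hr0 [Hr1 [Hcp [HU [HUb [Hw [He Hd]]]]]]]]].
  unfold Kc, wv.
  assert (A1 := Hw _ (Ubar_of_U _ _ _ (HU (1/4) r0 ltac:(lra) ltac:(lra)))).
  assert (A2 := Hw _ (Ubar_of_U _ _ _ (HU (3/4) r0 ltac:(lra) ltac:(lra)))).
  assert (0 <= 2 * (phi (Pt P0 tau (nu tau) (1 / 4) r0) - phi P0 - dot y (psub (Pt P0 tau (nu tau) (1 / 4) r0) P0) +
   (phi (Pt P0 tau (nu tau) (3 / 4) r0) - phi P0 - dot y (psub (Pt P0 tau (nu tau) (3 / 4) r0) P0))) / r0).
  { apply Rmult_le_pos; [lra|]. left. apply Rinv_0_lt_compat. lra. }
  lra.
Qed.

Lemma Gd_bound n p phi P0 tau y r0 c : AdjHyp n p phi P0 tau y r0 c ->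
  forall r, 0 < r <= r0/2 ->
  RInt (fun s => Bq phi P0 tau s r) (1/4) (3/4) >= c / (32 * Kc phi P0 tau y r0) / r.
Proof.
  intros H r Hr.
  assert (HK := K_pos n p phi P0 tau y r0 c H).
  assert (Hc : 0 < c) by (destruct H as [_ [_ [_ [_ [? _]]]]]; auto).
  assert (Hr0 : 0 < r0) by (destruct H as [_ [_ [? _]]]; auto).
  set (K := Kc phi P0 tau y r0) in *.
  set (lam := c / (16 * r * K)).
  set (D := Ws phi P0 tau y (3/4) r - Ws phi P0 tau y (1/4) r).
  assert (HA := IA n p phi P0 tau y r0 c H r ltac:(lra)). fold D in HA.
  assert (HL : is_RInt (fun s => 2 * lam - lam^2 / c * Aq phi P0 tau s r) (1/4) (3/4) (2 * lam * (1/2) - lam^2 / c * D)).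
  { assert (X := is_RInt_minus (fun _ => 2 * lam) (fun s => scal (lam^2 / c) (Aq phi P0 tau s r)) (1/4) (3/4) _ _
       (is_RInt_const (1/4) (3/4) (2 * lam)) (is_RInt_scal _ (1/4) (3/4) (lam^2/c) _ HA)).
    replace (2 * lam * (1/2) - lam^2 / c * D) with (minus (scal (3/4 - 1/4) (2 * lam)) (scal (lam^2/c) D)).
    - exact X.
    - unfold minus, plus, opp, scal; simpl; unfold mult; simpl. field; lra. }
  assert (HB := RInt_correct _ _ _ (exRInt_Bq n p phi P0 tau y r0 c H r ltac:(lra))).
  assert (Le := is_RInt_le (fun s => 2 * lam - lam^2 / c * Aq phi P0 tau s r) (fun s => Bq phi P0 tau s r) (1/4) (3/4) _ _ ltac:(lra) HL HB).
  assert (Le' : 2 * lam * (1 / 2) - lam ^ 2 / c * D <= RInt (fun s => Bq phi P0 tau s r) (1/4) (3/4)).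
  { apply Le. intros x Hx. apply Rge_le. apply (adj_pointwise n p phi P0 tau y r0 c H); lra. }
  assert (B1 := adj_bounds n p phi P0 tau y r0 c H (3/4) r ltac:(lra) Hr).
  assert (B2 := adj_bounds n p phi P0 tau y r0 c H (1/4) r ltac:(lra) Hr).
  assert (HD : D <= 8 * r * K).
  { unfold D. fold K in B1, B2. destruct B1 as [[B1a B1b] [B1c B1d]]. destruct B2 as [[B2a B2b] [B2c B2d]]. nra. }
  assert (Hl2 : 0 <= lam^2 / c) by (apply Rmult_le_pos; [apply pow2_ge_0|left; apply Rinv_0_lt_compat; lra]).
  assert (lam^2 / c * D <= lam^2 / c * (8 * r * K)) by (apply Rmult_le_compat_l; auto).
  assert (E : 2 * lam * (1/2) - lam^2 / c * (8 * r * K) = c / (32 * K) / r) by (unfold lam; field; lra).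
  lra.
Qed.

Lemma adj_false n p phi P0 tau y r0 c : AdjHyp n p phi P0 tau y r0 c -> False.
Proof.
  intros H.
  assert (HK := K_pos n p phi P0 tau y r0 c H).
  assert (Hc : 0 < c) by (destruct H as [_ [_ [_ [_ [? _]]]]]; auto).
  assert (Hr0 : 0 < r0) by (destruct H as [_ [_ [? _]]]; auto).
  set (K := Kc phi P0 tau y r0) in *.
  set (kap := c / (32 * K)).
  assert (Hkap : 0 < kap) by (unfold kap; apply Rdiv_lt_0_compat; lra).
  set (G := Gf phi P0 tau y).
  assert (Step : forall rho, 0 < rho -> 2 * rho <= r0 / 2 -> G (2 * rho) - G rho >= kap / 2).
  { intros rho Hrho H2.
    destruct (MVT_gen G rho (2 * rho) (fun x => RInt (fun s => Bq phi P0 tau s x) (1/4) (3/4))) as [xi [Hxi E]].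
    - rewrite Rmin_left, Rmax_right by lra. intros x Hx. apply (Leibniz n p phi P0 tau y r0 c H). lra.
    - rewrite Rmin_left, Rmax_right by lra. intros x Hx. apply (proj2 (continuity_pt_filterlim _ _)).
      exact (ex_derive_continuous G x (ex_intro _ _ (Leibniz n p phi P0 tau y r0 c H x ltac:(lra)))).
    - rewrite Rmin_left, Rmax_right in Hxi by lra.
      assert (Gd := Gd_bound n p phi P0 tau y r0 c H xi ltac:(lra)). fold K kap in Gd.
      rewrite E. 
      assert (kap / xi >= kap / (2 * rho)).
      { apply Rle_ge. unfold Rdiv. apply Rmult_le_compat_l. lra. apply Rinv_le_contravar; lra. }
      assert (kap / (2 * rho) * (2 * rho - rho) = kap / 2) by (field; lra).
      nra. }
  set (r1 := r0 / 2).
  assert (Iter : forall m, G r1 - G (r1 / 2 ^ m) >= INR m * (kap / 2)).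
  { induction m as [|m IH].
    - simpl. replace (r1 / 1) with r1 by field. lra.
    - assert (Hp : 1 <= 2 ^ m) by (apply pow_R1_Rle; lra).
      assert (Hr1 : 0 < r1) by (unfold r1; lra).
      assert (E2 : 2 * (r1 / 2 ^ (S m)) = r1 / 2 ^ m) by (simpl; field; lra).
      assert (H2 : r1 / 2 ^ m <= r1).
      { apply Rmult_le_reg_r with (2 ^ m). lra. unfold Rdiv. rewrite Rmult_assoc, Rinv_l by lra. nra. }
      assert (Hpos : 0 < r1 / 2 ^ (S m)) by (apply Rdiv_lt_0_compat; [lra| apply pow_lt; lra]).
      assert (S := Step (r1 / 2 ^ (S m)) Hpos ltac:(rewrite E2; unfold r1 in *; lra)).
      rewrite E2 in S. rewrite S_INR. lra. }
  assert (GB1 := G_bounds n p phi P0 tau y r0 c H r1 ltac:(unfold r1; lra)). fold K G in GB1.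
  destruct (archimed_cor1 (kap / (K + 1))) as [N [HN HN0]].
  { apply Rdiv_lt_0_compat; lra. }
  assert (HNp : 0 < INR N) by (apply lt_0_INR; lia).
  assert (HP : 1 <= 2 ^ N) by (apply pow_R1_Rle; lra).
  assert (GB2 := G_bounds n p phi P0 tau y r0 c H (r1 / 2 ^ N)). fold K G in GB2.
  assert (H2 : r1 / 2 ^ N <= r1).
  { apply Rmult_le_reg_r with (2 ^ N). lra. unfold Rdiv. rewrite Rmult_assoc, Rinv_l by lra. unfold r1. nra. }
  assert (Hpos : 0 < r1 / 2 ^ N) by (apply Rdiv_lt_0_compat; [unfold r1; lra| apply pow_lt; lra]).
  specialize (GB2 ltac:(unfold r1 in *; lra)).
  specialize (Iter N).
  assert (INR N * kap > K + 1).
  { apply Rmult_lt_compat_r with (r := INR N * (K + 1)) in HN; [|nra].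
    replace (/ INR N * (INR N * (K + 1))) with (K + 1) in HN by (field; lra).
    replace (kap / (K + 1) * (INR N * (K + 1))) with (INR N * kap) in HN by (field; lra). lra. }
  lra.
Qed.


Lemma cross_Pt (e P0 P1 q : pt) s r :
  cross e (psub (Pt P0 (psub P1 P0) (nu (psub P1 P0)) s r) q) =
  (1 - s) * cross e (psub P0 q) + s * cross e (psub P1 q) + r * cross e (nu (psub P1 P0)).
Proof. unfold cross, psub, Pt, nu; simpl. ring. Qed.

Lemma adjacent_case n p A b phi i y : (3 <= n)%nat -> ccw_convex_polygon n p -> 0 <= A ->
  is_solution n A p b phi -> (i < n)%nat ->
  subgrad n p phi i y -> subgrad n p phi (nxt n i) y -> False.
Proof.
  intros H3 Hcc HA Hsol Hi Si Sj.
  destruct Hsol as [Hcont [Hconv [Hs [Hdet [Hb Haff]]]]].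
  assert (Hj : (nxt n i < n)%nat) by (apply nxt_lt; auto).
  assert (Hji : nxt n i <> i) by (apply nxt_neq; lia).
  set (P0 := p i) in *. set (P1 := p (nxt n i)) in *.
  set (tau := psub P1 P0).
  assert (Htau : tau <> (0,0)).
  { intros E. destruct Hcc as [Hdist _]. apply (Hdist (nxt n i) i Hj Hi Hji).
    fold P0 P1. unfold tau, psub in E. destruct P0, P1; simpl in E. injection E; intros. f_equal; lra. }
  set (T2 := fst tau ^ 2 + snd tau ^ 2).
  assert (HT2 : T2 > 0).
  { unfold T2. destruct tau as [t1 t2]. simpl.
    destruct (Req_dec t1 0); destruct (Req_dec t2 0); try (subst; exfalso; apply Htau; reflexivity); nra. }
  assert (Hcr : cross tau (nu tau) = T2) by (unfold cross, nu, T2; simpl; ring).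
  destruct (fin_min n (fun k d => forall s r, 1/8 <= s <= 7/8 -> 0 < r <= d ->
      cross (psub (p (nxt n k)) (p k)) (psub (Pt P0 tau (nu tau) s r) (p k)) > 0)) as [d [Hd Hreg]].
  { intros k d d' Hk [H1 H2] s r Hs' Hr. apply Hk; auto. lra. }
  { intros k Hk. unfold tau. 
    destruct (cross_vertex n p k i Hcc Hk Hi) as [a1 a2].
    destruct (cross_vertex n p k (nxt n i) Hcc Hk Hj) as [b1 b2]. fold P0 in a1, a2. fold P1 in b1, b2.
    set (al := cross (psub (p (nxt n k)) (p k)) (psub P0 (p k))) in *.
    set (be := cross (psub (p (nxt n k)) (p k)) (psub P1 (p k))) in *.
    set (ga := cross (psub (p (nxt n k)) (p k)) (nu (psub P1 P0))).
    destruct (Nat.eq_dec k i) as [->|Eki].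
    - exists 1. split. lra. intros s r Hs' Hr. rewrite cross_Pt. fold P1 P0.
      assert (E1 : cross (psub P1 P0) (psub P0 P0) = 0) by (unfold cross, psub; simpl; ring).
      assert (E2 : cross (psub P1 P0) (psub P1 P0) = 0) by (unfold cross, psub; simpl; ring).
      rewrite E1, E2. fold tau. rewrite Hcr. nra.
    - assert (Hab : al + be > 0).
      { destruct (Nat.eq_dec i (nxt n k)) as [Ek|Ek].
        + assert (nxt n i <> k) by (rewrite Ek; apply nxt_nxt_neq; auto).
          assert (nxt n i <> nxt n k) by (rewrite <- Ek; auto).
          specialize (b2 H H0). lra.
        + assert (i <> k) by auto. specialize (a2 H Ek). lra. }
      assert (Hg : 0 < Rabs ga + 1) by (pose proof (Rabs_pos ga); lra).
      exists ((al + be) / (8 * (Rabs ga + 1))). split. apply Rdiv_lt_0_compat; lra.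
      intros s r Hs' Hr. rewrite cross_Pt. fold al be ga.
      assert (r * (8 * (Rabs ga + 1)) <= al + be).
      { destruct Hr as [Hr1 Hr2]. apply Rmult_le_reg_r with (/ (8 * (Rabs ga + 1))).
        apply Rinv_0_lt_compat; lra. rewrite Rmult_assoc, Rinv_r by lra. unfold Rdiv in Hr2. lra. }
      pose proof (Rabs_maj2 ga). pose proof (Rabs_pos ga). nra. }
  set (r0 := Rmin d 1).
  assert (Hr0 : 0 < r0) by (unfold r0; apply Rmin_pos; lra).
  assert (Hr01 : r0 <= 1) by (unfold r0; apply Rmin_r).
  assert (Hr0d : r0 <= d) by (unfold r0; apply Rmin_l).
  assert (HU : forall s r, 1/8 <= s <= 7/8 -> 0 < r <= r0 -> polyU n p (Pt P0 tau (nu tau) s r)).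
  { intros s r Hs' Hr k Hk. apply Hreg; auto. lra. }
  assert (HUb : forall s, 0 <= s <= 1 -> polyUbar n p (Pt P0 tau (nu tau) s 0)).
  { intros s Hs' k Hk. unfold tau. rewrite cross_Pt.
    destruct (cross_vertex n p k i Hcc Hk Hi) as [a1 _].
    destruct (cross_vertex n p k (nxt n i) Hcc Hk Hj) as [b1 _]. fold P0 in a1. fold P1 in b1. nra. }
  assert (HP1 : phi P1 - phi P0 = dot y tau) by (apply (subgrad_both n p phi i (nxt n i) y Hcc Hi Hj Si Sj)).
  assert (He : forall s, 0 <= s <= 1 -> phi (Pt P0 tau (nu tau) s 0) = phi P0 + s * dot y tau).
  { intros s Hs'. destruct (Haff i Hi) as [a1 [a2 [c0 Ha]]]. fold P0 P1 in Ha.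
    assert (Q0 := Ha 0 ltac:(lra)). assert (Q1 := Ha 1 ltac:(lra)). assert (Qs := Ha s Hs').
    assert (E0 : pcomb 0 P0 P1 = P0) by (destruct P0; unfold pcomb; simpl; f_equal; ring).
    assert (E1 : pcomb 1 P0 P1 = P1) by (destruct P1; unfold pcomb; simpl; f_equal; ring).
    assert (Es : pcomb s P0 P1 = Pt P0 tau (nu tau) s 0) by (unfold pcomb, Pt, tau, psub; apply injective_projections; simpl; lra).
    rewrite E0 in Q0. rewrite E1 in Q1. rewrite Es in Qs. rewrite Qs.
    rewrite <- HP1. rewrite Q0, Q1.
    unfold pcomb, Pt, tau, psub, nu; simpl. ring. }
  set (L := sqrt (2 * T2)).
  assert (HL : L > 0) by (unfold L; apply sqrt_lt_R0; lra).
  assert (Hd' : forall s r, 1/8 <= s <= 7/8 -> 0 < r <= r0 ->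
      hess_det phi (Pt P0 tau (nu tau) s r) * (cross tau (nu tau))^2 >= / (2 * L) * T2 ^ 2).
  { intros s r Hs' Hr. rewrite Hcr. rewrite Hdet by (apply HU; auto).
    assert (V := V_ge_term n A p (Pt P0 tau (nu tau) s r) i HA Hi). fold P0 in V.
    assert (En : enorm (psub (Pt P0 tau (nu tau) s r) P0) = sqrt ((s^2 + r^2) * T2)).
    { unfold enorm, Pt, psub, nu, T2; simpl. f_equal. ring. }
    rewrite En in V.
    assert (Hsr : s^2 + r^2 > 0) by nra.
    assert (Hsr2 : s^2 + r^2 <= 2) by nra.
    assert (Hpos : 0 < sqrt ((s^2 + r^2) * T2)) by (apply sqrt_lt_R0; apply Rmult_lt_0_compat; lra).
    assert (Hle : sqrt ((s^2 + r^2) * T2) <= L) by (unfold L; apply sqrt_le_1_alt; apply Rmult_le_compat_r; lra).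
    assert (/ (2 * sqrt ((s ^ 2 + r ^ 2) * T2)) >= / (2 * L)).
    { apply Rle_ge. apply Rinv_le_contravar; lra. }
    assert (0 < T2 ^ 2) by nra.
    apply Rmult_ge_compat_r; lra. }
  apply (adj_false n p phi P0 tau y r0 (/ (2 * L) * T2 ^ 2)).
  refine (conj Hs (conj Hconv (conj Hr0 (conj Hr01 (conj _ (conj HU (conj HUb (conj _ (conj He Hd'))))))))).
  - apply Rmult_lt_0_compat. apply Rinv_0_lt_compat; lra. nra.
  - intros u Hu. apply Si; auto.
Qed.


Theorem mainTheorem6 (n : nat) (p : nat -> pt) (A : R) (b : nat -> R)
  (phi : pt -> R) :
  (3 <= n)%nat ->
  ccw_convex_polygon n p ->
  0 <= A ->
  is_solution n A p b phi ->
  (forall i j, (i < n)%nat -> (j < n)%nat -> i <> j ->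
     forall y, ~ (subgrad n p phi i y /\ subgrad n p phi j y)) /\
  (forall i, (i < n)%nat ->
     closed (subgrad n p phi i) /\ convex_set (subgrad n p phi i) /\
     (forall y, subgrad n p phi i y -> Wset n p b i y)).
Proof.
  intros H3 Hc HA Hsol. split.
  - intros i j Hi Hj Hij y [Si Sj].
    destruct (Nat.eq_dec j (nxt n i)) as [E|E].
    + subst j. apply (adjacent_case n p A b phi i y); auto.
    + destruct (Nat.eq_dec i (nxt n j)) as [E'|E'].
      * subst i. apply (adjacent_case n p A b phi j y); auto.
      * apply (nonadj_case n p A b phi i j y); auto.
  - intros i Hi. split; [|split].
    + apply subgrad_closed.
    + apply subgrad_convex.
    + intros y Hy. apply (subgrad_W n p A b phi i y); auto.
Qed.
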